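(* Let $R_e\approx 1.4877$ be the unique positive root of $\frac{10}{7(R+1)}-\frac{R^2\sqrt{R}}{R^2+R+1}=0$. Define, for $x,y\ge 0$, $$d_0(x,y)=\frac{1+2x}{1+x}+\frac{xy}{1+y+xy},\quad d_1(x,y)=-\frac{x}{1+x}-\frac{xy}{1+y+xy}-\frac{xy^2}{1+y+xy}\frac{1+x}{1+y},\quad d_2(x,y)=\frac{xy^2}{1+y+xy}\frac{1+x}{1+y},$$ and, for $0<x,y,z<R_e$, $$d_*(x,y)=-\tfrac{10}{7}\sqrt{x}\,d_1(x,y)-\sqrt{xy}\,d_2(x,y),$$ $$p(x,y,z)=2d_0(y,z)-\sqrt{yz}\,d_2(y,z)-\tfrac{49}{100}d_*(y,z)-d_*(x,y),\qquad q(x,y,z)=d_*(y,z)-\sqrt{xy}\,d_2(x,y).$$ Let $\tau_k>0$ ($k\ge 1$) be time-step sizes with step ratios $r_k=\tau_k/\tau_{k-1}$ satisfying $0<r_k<R_e$ for all $k\ge 2$, and set $d^{(n)}_j=d_j(r_n,r_{n-1})$ for $j=0,1,2$. Then for every $n\ge 3$ and all real numbers $v_{n-2},v_{n-1},v_n$, $$2v_n\tau_n\big(d^{(n)}_0v_n+d^{(n)}_1v_{n-1}+d^{(n)}_2v_{n-2}\big)=G[v_n,v_{n-1}]-G[v_{n-1},v_{n-2}]+F[v_n,v_{n-1},v_{n-2}],$$ where $$G[v_n,v_{n-1}]=d_*(r_{n+1},r_n)\tau_nv_n^2+\sqrt{r_{n+1}r_n}\,d_2(r_{n+1},r_n)\big(\tfrac{7}{10}\sqrt{\tau_n}v_n-\sqrt{\tau_{n-1}}v_{n-1}\big)^2$$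 (and $G[v_{n-1},v_{n-2}]$ is the same expression with $n$ replaced by $n-1$), $$F[v_n,v_{n-1},v_{n-2}]=p(r_{n+1},r_n,r_{n-1})\tau_nv_n^2+q(r_{n+1},r_n,r_{n-1})\big(\tfrac{7}{10}\sqrt{\tau_n}v_n-\sqrt{\tau_{n-1}}v_{n-1}\big)^2+\sqrt{r_nr_{n-1}}\,d_2(r_n,r_{n-1})\big(\sqrt{\tau_n}v_n-\tfrac{7}{10}\sqrt{\tau_{n-1}}v_{n-1}+\sqrt{\tau_{n-2}}v_{n-2}\big)^2,$$ the functionals $G$ and $F$ are nonnegative, and $F[v_n,v_{n-1},v_{n-2}]\ge \frac{\tau_n}{50}v_n^2$.
   Context: The quantities $d^{(n)}_j$ are the variable-step BDF3 kernels: the BDF3 formula is $D_3v^n=\sum_{j=1}^n d^{(n)}_{n-j}\partial_\tau v^j$ with $\partial_\tau v^j=(v^j-v^{j-1})/\tau_j$, $d^{(n)}_j=d_j(r_n,r_{n-1})$ for $j=0,1,2$ and $d^{(n)}_j=0$ for $j\ge 3$. *)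

(* Defs.v *)
From Stdlib Require Import Reals Lra.
Open Scope R_scope.

Definition Re_eq (R0 : R) : R :=
  10 / (7 * (R0 + 1)) - R0 ^ 2 * sqrt R0 / (R0 ^ 2 + R0 + 1).

Definition kd0 (x y : R) : R := (1 + 2 * x) / (1 + x) + x * y / (1 + y + x * y).
Definition kd1 (x y : R) : R :=
  - (x / (1 + x)) - x * y / (1 + y + x * y)
  - x * y ^ 2 / (1 + y + x * y) * ((1 + x) / (1 + y)).
Definition kd2 (x y : R) : R := x * y ^ 2 / (1 + y + x * y) * ((1 + x) / (1 + y)).

Definition dstar (x y : R) : R :=
  - (10 / 7) * sqrt x * kd1 x y - sqrt (x * y) * kd2 x y.

Definition pf (x y z : R) : R :=
  2 * kd0 y z - sqrt (y * z) * kd2 y z - (49 / 100) * dstar y z - dstar x y.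
Definition qf (x y z : R) : R := dstar y z - sqrt (x * y) * kd2 x y.

Definition ratio (tau : nat -> R) (k : nat) : R := tau k / tau (k - 1)%nat.

(* G[v_n, v_{n-1}] with index n, a = v_n, b = v_{n-1} *)
Definition Gfun (tau : nat -> R) (n : nat) (a b : R) : R :=
  dstar (ratio tau (S n)) (ratio tau n) * tau n * a ^ 2
  + sqrt (ratio tau (S n) * ratio tau n) * kd2 (ratio tau (S n)) (ratio tau n)
    * ((7 / 10) * sqrt (tau n) * a - sqrt (tau (n - 1)%nat) * b) ^ 2.

(* F[v_n, v_{n-1}, v_{n-2}] with a = v_n, b = v_{n-1}, c = v_{n-2} *)
Definition Ffun (tau : nat -> R) (n : nat) (a b c : R) : R :=
  pf (ratio tau (S n)) (ratio tau n) (ratio tau (n - 1)%nat) * tau n * a ^ 2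
  + qf (ratio tau (S n)) (ratio tau n) (ratio tau (n - 1)%nat)
    * ((7 / 10) * sqrt (tau n) * a - sqrt (tau (n - 1)%nat) * b) ^ 2
  + sqrt (ratio tau n * ratio tau (n - 1)%nat) * kd2 (ratio tau n) (ratio tau (n - 1)%nat)
    * (sqrt (tau n) * a - (7 / 10) * sqrt (tau (n - 1)%nat) * b
       + sqrt (tau (n - 2)%nat) * c) ^ 2.

(* Main.v *)
Require Import Defs.
From Stdlib Require Import Reals Lra Lia Psatz.
Open Scope R_scope.
Notation cc := (6099/5000).

Lemma frac_le a b c d : 0 < b -> 0 < d -> a*d <= c*b -> a/b <= c/d.
Proof. intros Hb Hd H.
 assert (E: c/d - a/b = (c*b - a*d) * /(b*d)) by (field; lra).
 assert (0 < /(b*d)) by (apply Rinv_0_lt_compat; nra). nra. Qed.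

Lemma div_nonneg a b : 0 <= a -> 0 < b -> 0 <= a/b.
Proof. intros. unfold Rdiv. apply Rmult_le_pos; [lra|]. left; apply Rinv_0_lt_compat; lra. Qed.

Lemma kd2_nonneg x y : 0 <= x -> 0 <= y -> 0 <= kd2 x y.
Proof. intros. unfold kd2. apply Rmult_le_pos; apply div_nonneg; nra. Qed.

Lemma kd2_mono x x' y : 0 <= x -> x <= x' -> 0 <= y -> kd2 x y <= kd2 x' y.
Proof. intros. unfold kd2. apply Rmult_le_compat.
 - apply div_nonneg; nra.
 - apply div_nonneg; nra.
 - apply frac_le; [nra|nra|]. assert (0 <= y^2*(1+y)) by nra.
   assert ((x'-x)*(y^2*(1+y)) >= 0) by nra. nra.
 - apply frac_le; nra. Qed.

Lemma L_dstar X Y : 0 < X -> 0 < Y -> dstar (X*X) (Y*Y) =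
  (10/7)*X*((X*X)/(1+X*X) + (X*X)*(Y*Y)/(1+Y*Y+(X*X)*(Y*Y)))
  + X*kd2 (X*X) (Y*Y)*(10/7 - Y).
Proof. intros. unfold dstar, kd1, kd2. rewrite (sqrt_mult (X*X) (Y*Y)) by nra.
 rewrite !sqrt_square by lra. ring. Qed.

Lemma dstar_nonneg X Y : 0 < X -> 0 < Y -> Y <= 10/7 -> 0 <= dstar (X*X) (Y*Y).
Proof. intros. rewrite L_dstar by lra.
 assert (0 <= (X*X)/(1+X*X)) by (apply div_nonneg; nra).
 assert (0 <= (X*X)*(Y*Y)/(1+Y*Y+(X*X)*(Y*Y))) by (apply div_nonneg; nra).
 assert (0 <= kd2 (X*X) (Y*Y)) by (apply kd2_nonneg; nra).
 assert (0 <= X*kd2 (X*X) (Y*Y)) by nra. nra. Qed.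

Lemma q_nonneg X Y Z S : 0 < X -> X <= S -> 0 < Y -> Y < S -> 0 < Z -> Z <= 10/7 ->
  7*(S*S+1)*((S*S)^2*S) = 10*((S*S)^2+S*S+1) ->
  0 <= qf (X*X) (Y*Y) (Z*Z).
Proof. intros HX HXS HY HYS HZ HZ1 Heq. unfold qf. rewrite L_dstar by lra.
 rewrite (sqrt_mult (X*X) (Y*Y)) by nra. rewrite !sqrt_square by lra.
 assert (Hw: 0 <= (Y*Y)*(Z*Z)/(1+Z*Z+(Y*Y)*(Z*Z))) by (apply div_nonneg; nra).
 assert (Hk: 0 <= kd2 (Y*Y) (Z*Z)) by (apply kd2_nonneg; nra).
 assert (Hm: kd2 (X*X) (Y*Y) <= kd2 (S*S) (Y*Y)) by (apply kd2_mono; nra).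
 assert (Hk2: 0 <= kd2 (X*X) (Y*Y)) by (apply kd2_nonneg; nra).
 set (L := 10/7 + Y*Y*(1+S*S)*(10/7 - S*S*S)).
 assert (HL: L*(S*S) = 10/7*(S*S - Y*Y)).
 { unfold L. assert (S^5*(1+S*S) = 10/7*((S*S)^2+S*S+1)) by nra. nra. }
 assert (HLp: 0 < L).
 { assert (0 < L*(S*S)) by (rewrite HL; nra). nra. }
 assert (Hid: 10/7*((Y*Y)/(1+Y*Y)) - S*kd2 (S*S) (Y*Y) =
   Y*Y*L/((1+Y*Y)*(1+Y*Y+S*S*(Y*Y)))).
 { unfold L, kd2. field. split; nra. }
 assert (0 <= Y*Y*L/((1+Y*Y)*(1+Y*Y+S*S*(Y*Y)))) by (apply div_nonneg; nra).
 assert (X*kd2 (X*X) (Y*Y) <= S*kd2 (S*S) (Y*Y)) by (apply Rmult_le_compat; nra).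
 assert (0 <= Y*(10/7 - Z)*kd2 (Y*Y) (Z*Z)) by (apply Rmult_le_pos; nra).
 nra. Qed.
Definition B1 (Y:R) : R := (204161372631/217692303500) * (Y/cc)^0 * (1 - Y/cc)^5 + (204161372631/43538460700) * (Y/cc)^1 * (1 - Y/cc)^4 + (454553357352246820835900883/34014422421875000000000000) * (Y/cc)^2 * (1 - Y/cc)^3 + (682441527818975862854515149/34014422421875000000000000) * (Y/cc)^3 * (1 - Y/cc)^2 + (124687076025978560943909759626848790211843/12148008007812500000000000000000000000000) * (Y/cc)^4 * (1 - Y/cc)^1 + (71326111973454930368484989811801539001/9765625000000000000000000000000000000) * (Y/cc)^5 * (1 - Y/cc)^0.
Definition B2 (Y:R) : R := (12698388426789784431/2187500000000000000) * (Y/cc)^0 * (1 - Y/cc)^9 + (114285495841108059879/2187500000000000000) * (Y/cc)^1 * (1 - Y/cc)^8 + (85390201487319353298146786970308283/341796875000000000000000000000000) * (Y/cc)^2 * (1 - Y/cc)^7 + (147592956401962300058469464224526877/195312500000000000000000000000000) * (Y/cc)^3 * (1 - Y/cc)^6 + (187660649860764275680153894809176878799078858757243/122070312500000000000000000000000000000000000000) * (Y/cc)^4 * (1 - Y/cc)^5 + (13117536515288565417320920783794770951164920726575024601/6103515625000000000000000000000000000000000000000000) * (Y/cc)^5 * (1 - Y/cc)^4 + (44235511218444191872870105692625865186172999535562496372501/21362304687500000000000000000000000000000000000000000000) * (Y/cc)^6 * (1 - Y/cc)^3 + (1380768007766661150490447674171800290731931051162640983632366807/1068115234375000000000000000000000000000000000000000000000000)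 * (Y/cc)^7 * (1 - Y/cc)^2 + (33138495701977977319957875453311891630796900711717391577827401/76293945312500000000000000000000000000000000000000000000000) * (Y/cc)^8 * (1 - Y/cc)^1 + (71412786472469019724358964211378573508769534665727035515367649/15258789062500000000000000000000000000000000000000000000000000) * (Y/cc)^9 * (1 - Y/cc)^0.
Definition Aex (Y : R) : R :=
  2 + (2 - 7/10*Y)*((Y*Y)/(1+Y*Y))
  - ((10/7)*cc*((cc*cc)/(1+cc*cc) + (cc*cc)*(Y*Y)/(1+Y*Y+(cc*cc)*(Y*Y)))
     + cc*kd2 (cc*cc) (Y*Y)*(10/7 - Y)).
Definition Bex (Y : R) : R :=
  (2 - 7/10*Y) - (7/10*Y + 51/100*Y*cc)*((cc*cc)*(1+Y*Y)/(1+cc*cc)).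
Definition Wex (Y : R) : R := (Y*Y)*(cc*cc)/(1+cc*cc+(Y*Y)*(cc*cc)).

Lemma A_id Y : 0 <= Y -> (Aex Y - 1/50) * ((1+Y*Y)*(1+Y*Y+(cc*cc)*(Y*Y))) = B1 Y.
Proof. intros HY. unfold Aex, B1, kd2. field. split; nra. Qed.

Lemma AW_id Y : 0 <= Y -> (Aex Y + Wex Y * Bex Y - 1/50) *
   ((1+Y*Y)*(1+Y*Y+(cc*cc)*(Y*Y))*(1+cc*cc)*(1+cc*cc+(Y*Y)*(cc*cc))) = B2 Y.
Proof. intros HY. unfold Aex, Bex, Wex, B2, kd2. field. repeat split; nra. Qed.

Ltac bpos := repeat (apply Rplus_le_le_0_compat || apply Rmult_le_pos);
  try (apply pow_le); try lra.

Lemma B1_pos Y : 0 <= Y <= cc -> 0 <= B1 Y.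
Proof. intros [H1 H2]. assert (0 <= Y/cc) by (assert (Y/cc = Y*(5000/6099)) by field; lra).
 assert (0 <= 1 - Y/cc) by (assert (Y/cc = Y*(5000/6099)) by field; lra).
 unfold B1; set (t:=Y/cc) in *; set (s:=1-t) in *; clearbody s t; bpos. Qed.
Lemma B2_pos Y : 0 <= Y <= cc -> 0 <= B2 Y.
Proof. intros [H1 H2]. assert (0 <= Y/cc) by (assert (Y/cc = Y*(5000/6099)) by field; lra).
 assert (0 <= 1 - Y/cc) by (assert (Y/cc = Y*(5000/6099)) by field; lra).
 unfold B2; set (t:=Y/cc) in *; set (s:=1-t) in *; clearbody s t; bpos. Qed.

Lemma A_ge Y : 0 <= Y <= cc -> 1/50 <= Aex Y.
Proof. intros HY. pose proof (A_id Y (proj1 HY)). pose proof (B1_pos Y HY).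
 assert (0 < (1+Y*Y)*(1+Y*Y+(cc*cc)*(Y*Y))) by (apply Rmult_lt_0_compat; nra).
 assert (0 <= Aex Y - 1/50); [|lra].
 apply (Rmult_le_reg_r _ _ _ H1). lra. Qed.
Lemma AW_ge Y : 0 <= Y <= cc -> 1/50 <= Aex Y + Wex Y * Bex Y.
Proof. intros HY. pose proof (AW_id Y (proj1 HY)). pose proof (B2_pos Y HY).
 assert (0 < (1+Y*Y)*(1+Y*Y+(cc*cc)*(Y*Y))*(1+cc*cc)*(1+cc*cc+(Y*Y)*(cc*cc))).
 { repeat apply Rmult_lt_0_compat; nra. }
 assert (0 <= Aex Y + Wex Y * Bex Y - 1/50); [|lra].
 apply (Rmult_le_reg_r _ _ _ H1). lra. Qed.

Lemma p_bound X Y Z : 0 < X -> X <= cc -> 0 < Y -> Y <= cc -> 0 < Z -> Z <= cc ->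
  1/50 <= pf (X*X) (Y*Y) (Z*Z).
Proof. intros HX HXc HY HYc HZ HZc.
 set (u := (Y*Y)/(1+Y*Y)).
 set (w := (Y*Y)*(Z*Z)/(1+Z*Z+(Y*Y)*(Z*Z))).
 set (k := (Z*Z)*(1+Y*Y)/(1+Z*Z)).
 assert (Hp: pf (X*X) (Y*Y) (Z*Z) = 2 + (2 - 7/10*Y)*u + w*((2 - 7/10*Y) - (7/10*Y + 51/100*Y*Z)*k)
     - dstar (X*X) (Y*Y)).
 { unfold pf, kd0. rewrite (L_dstar Y Z) by lra. rewrite (sqrt_mult (Y*Y) (Z*Z)) by nra.
   rewrite !sqrt_square by lra. unfold u, w, k, kd2. field. repeat split; nra. }
 assert (Hd: dstar (X*X) (Y*Y) <= (10/7)*cc*((cc*cc)/(1+cc*cc) + (cc*cc)*(Y*Y)/(1+Y*Y+(cc*cc)*(Y*Y)))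
     + cc*kd2 (cc*cc) (Y*Y)*(10/7 - Y)).
 { rewrite L_dstar by lra.
   assert (H1: (X*X)/(1+X*X) <= (cc*cc)/(1+cc*cc)) by (apply frac_le; nra).
   assert (H2: (X*X)*(Y*Y)/(1+Y*Y+(X*X)*(Y*Y)) <= (cc*cc)*(Y*Y)/(1+Y*Y+(cc*cc)*(Y*Y))).
   { apply frac_le; try nra. assert (0 <= Y*Y*Y*Y*(1+Y*Y)) by nra.
     assert (X*X <= cc*cc) by nra. nra. }
   assert (H3: kd2 (X*X) (Y*Y) <= kd2 (cc*cc) (Y*Y)) by (apply kd2_mono; nra).
   assert (0 <= (X*X)/(1+X*X)) by (apply div_nonneg; nra).
   assert (0 <= (X*X)*(Y*Y)/(1+Y*Y+(X*X)*(Y*Y))) by (apply div_nonneg; nra).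
   assert (0 <= kd2 (X*X) (Y*Y)) by (apply kd2_nonneg; nra).
   apply Rplus_le_compat.
   - apply Rmult_le_compat; lra.
   - apply Rmult_le_compat_r; [lra|]. apply Rmult_le_compat; lra. }
 assert (Hk: k <= (cc*cc)*(1+Y*Y)/(1+cc*cc)).
 { unfold k. apply frac_le; try nra. assert (Z*Z <= cc*cc) by nra. nra. }
 assert (Hk0: 0 <= k) by (unfold k; apply div_nonneg; nra).
 assert (Hw0: 0 <= w) by (unfold w; apply div_nonneg; nra).
 assert (HwW: w <= Wex Y).
 { unfold w, Wex. apply frac_le; try nra. assert (Z*Z <= cc*cc) by nra.
   assert (0 <= Y*Y*(1+Y*Y)) by nra. nra. }
 assert (HW0: 0 < Wex Y) by (unfold Wex; apply Rdiv_lt_0_compat; nra).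
 pose proof (A_ge Y ltac:(lra)) as HA. pose proof (AW_ge Y ltac:(lra)) as HAW.
 assert (HB: w*((2 - 7/10*Y) - (7/10*Y + 51/100*Y*Z)*k) >= w * Bex Y).
 { unfold Bex. apply Rle_ge, Rmult_le_compat_l; [lra|].
   assert ((7/10*Y + 51/100*Y*Z)*k <= (7/10*Y + 51/100*Y*cc)*((cc*cc)*(1+Y*Y)/(1+cc*cc))).
   { apply Rmult_le_compat; nra. } lra. }
 assert (Hcomb: 1/50 <= Aex Y + w * Bex Y).
 { assert ((Aex Y + w*Bex Y - 1/50)*Wex Y = (Wex Y - w)*(Aex Y - 1/50) + w*(Aex Y + Wex Y*Bex Y - 1/50)) by ring.
   assert (0 <= (Wex Y - w)*(Aex Y - 1/50)) by (apply Rmult_le_pos; lra).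
   assert (0 <= w*(Aex Y + Wex Y*Bex Y - 1/50)) by (apply Rmult_le_pos; lra).
   nra. }
 rewrite Hp. unfold Aex in Hcomb. fold u in Hcomb. lra. Qed.
Lemma Re_eqS Re : 0 < Re -> Re_eq Re = 0 ->
  7*(sqrt Re*sqrt Re+1)*((sqrt Re*sqrt Re)^2*sqrt Re) = 10*((sqrt Re*sqrt Re)^2+sqrt Re*sqrt Re+1).
Proof. intros H0 H. unfold Re_eq in H.
 assert (HS: sqrt Re * sqrt Re = Re) by (apply sqrt_sqrt; lra).
 assert (0 < sqrt Re) by (apply sqrt_lt_R0; lra).
 rewrite HS. set (S := sqrt Re) in *. clearbody S. subst Re.
 set (f1 := 10 / (7 * (S*S + 1))) in H. set (f2 := (S*S)^2 * S / ((S*S)^2 + S*S + 1)) in H.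
 assert (e1: 10 = f1 * (7*(S*S+1))) by (unfold f1; field; nra).
 assert (e2: (S*S)^2*S = f2 * ((S*S)^2+S*S+1)) by (unfold f2; field; nra).
 assert (Hf: f1 = f2) by lra. rewrite e2, e1, Hf. ring. Qed.

Lemma S_lt S : 0 < S -> 7*(S*S+1)*((S*S)^2*S) = 10*((S*S)^2+S*S+1) -> S < cc.
Proof. intros H0 H. destruct (Rlt_or_le S cc) as [h|h]; [exact h|exfalso].
 set (d := S - cc). assert (Hd: 0 <= d) by (unfold d; lra).
 assert (S = cc + d) by (unfold d; ring). clearbody d. subst S.
 assert (0 <= d^2) by nra. assert (0<= d^3) by (apply pow_le; lra).
 assert (0<= d^4) by (apply pow_le; lra). assert (0<= d^5) by (apply pow_le; lra).
 assert (0<= d^6) by (apply pow_le; lra). assert (0<= d^7) by (apply pow_le; lra).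
 ring_simplify in H. lra. Qed.

Theorem lemma3p1 (Re : R)
  (hRe_pos : 0 < Re) (hRe_root : Re_eq Re = 0)
  (hRe_uniq : forall R0 : R, 0 < R0 -> Re_eq R0 = 0 -> R0 = Re)
  (tau : nat -> R)
  (htau : forall k : nat, (1 <= k)%nat -> 0 < tau k)
  (hratio : forall k : nat, (2 <= k)%nat -> 0 < ratio tau k /\ ratio tau k < Re) :
  forall (n : nat), (3 <= n)%nat ->
  forall vn vn1 vn2 : R,
    2 * vn * tau n *
      (kd0 (ratio tau n) (ratio tau (n - 1)%nat) * vn
       + kd1 (ratio tau n) (ratio tau (n - 1)%nat) * vn1
       + kd2 (ratio tau n) (ratio tau (n - 1)%nat) * vn2)
    = Gfun tau n vn vn1 - Gfun tau (n - 1)%nat vn1 vn2 + Ffun tau n vn vn1 vn2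
  /\ 0 <= Gfun tau n vn vn1
  /\ 0 <= Gfun tau (n - 1)%nat vn1 vn2
  /\ 0 <= Ffun tau n vn vn1 vn2
  /\ tau n / 50 * vn ^ 2 <= Ffun tau n vn vn1 vn2.
Proof.
 intros n Hn vn vn1 vn2.
 assert (T0: 0 < tau n) by (apply htau; lia).
 assert (T1: 0 < tau (n-1)%nat) by (apply htau; lia).
 assert (T2: 0 < tau (n-2)%nat) by (apply htau; lia).
 destruct (hratio (S n) ltac:(lia)) as [Rx1 Rx2].
 destruct (hratio n ltac:(lia)) as [Ry1 Ry2].
 destruct (hratio (n-1)%nat ltac:(lia)) as [Rz1 Rz2].
 pose proof (Re_eqS Re hRe_pos hRe_root) as Heq.
 assert (HS0: 0 < sqrt Re) by (apply sqrt_lt_R0; lra).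
 pose proof (S_lt (sqrt Re) HS0 Heq) as HSc.
 unfold Gfun, Ffun.
 replace (S (n-1)) with n by lia.
 replace (n-1-1)%nat with (n-2)%nat by lia.
 assert (Ey: ratio tau n = tau n / tau (n-1)%nat) by reflexivity.
 assert (Ez: ratio tau (n-1)%nat = tau (n-1)%nat / tau (n-2)%nat).
 { unfold ratio. replace (n-1-1)%nat with (n-2)%nat by lia. reflexivity. }
 set (x := ratio tau (S n)) in *.
 set (y := ratio tau n) in *.
 set (z := ratio tau (n-1)%nat) in *.
 clearbody x y z.
 assert (HX0: 0 < sqrt x) by (apply sqrt_lt_R0; lra).
 assert (HY0: 0 < sqrt y) by (apply sqrt_lt_R0; lra).
 assert (HZ0: 0 < sqrt z) by (apply sqrt_lt_R0; lra).
 assert (HXS: sqrt x < sqrt Re) by (apply sqrt_lt_1_alt; lra).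
 assert (HYS: sqrt y < sqrt Re) by (apply sqrt_lt_1_alt; lra).
 assert (HZS: sqrt z < sqrt Re) by (apply sqrt_lt_1_alt; lra).
 assert (Hxx: sqrt x * sqrt x = x) by (apply sqrt_sqrt; lra).
 assert (Hyy: sqrt y * sqrt y = y) by (apply sqrt_sqrt; lra).
 assert (Hzz: sqrt z * sqrt z = z) by (apply sqrt_sqrt; lra).
 assert (Hq: 0 <= qf x y z).
 { pose proof (q_nonneg (sqrt x) (sqrt y) (sqrt z) (sqrt Re)) as H.
   rewrite Hxx, Hyy, Hzz in H. apply H; lra. }
 assert (Hp: 1/50 <= pf x y z).
 { pose proof (p_bound (sqrt x) (sqrt y) (sqrt z)) as H.
   rewrite Hxx, Hyy, Hzz in H. apply H; lra. }
 assert (Hdxy: 0 <= dstar x y).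
 { pose proof (dstar_nonneg (sqrt x) (sqrt y)) as H.
   rewrite Hxx, Hyy in H. apply H; lra. }
 assert (Hdyz: 0 <= dstar y z).
 { pose proof (dstar_nonneg (sqrt y) (sqrt z)) as H.
   rewrite Hyy, Hzz in H. apply H; lra. }
 assert (Kxy: 0 <= kd2 x y) by (apply kd2_nonneg; lra).
 assert (Kyz: 0 <= kd2 y z) by (apply kd2_nonneg; lra).
 assert (Sxy: 0 <= sqrt (x*y)) by apply sqrt_pos.
 assert (Syz: 0 <= sqrt (y*z)) by apply sqrt_pos.
 split; [|split; [|split; [|split]]].
 -
   set (A := sqrt (tau n)). set (B := sqrt (tau (n-1)%nat)). set (Cq := sqrt (tau (n-2)%nat)).
   assert (HA: tau n = A*A) by (unfold A; rewrite sqrt_sqrt; lra).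
   assert (HB: tau (n-1)%nat = B*B) by (unfold B; rewrite sqrt_sqrt; lra).
   assert (HC: tau (n-2)%nat = Cq*Cq) by (unfold Cq; rewrite sqrt_sqrt; lra).
   assert (A0: 0 < A) by (apply sqrt_lt_R0; lra).
   assert (B0: 0 < B) by (apply sqrt_lt_R0; lra).
   assert (C0: 0 < Cq) by (apply sqrt_lt_R0; lra).
   clearbody A B Cq.
   assert (Hsy: sqrt y = A/B).
   { rewrite Ey, HA, HB. replace (A*A/(B*B)) with ((A/B)*(A/B)) by (field; lra).
     apply sqrt_square. apply div_nonneg; lra. }
   assert (Hsyz: sqrt (y*z) = A/Cq).
   { rewrite Ey, Ez, HA, HB, HC. replace (A*A/(B*B)*(B*B/(Cq*Cq))) with ((A/Cq)*(A/Cq)) by (field; lra).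
     apply sqrt_square. apply div_nonneg; lra. }
   unfold pf, qf, dstar. rewrite Hsy, Hsyz, ?HA, ?HB, ?HC.
   field; lra.
 - apply Rplus_le_le_0_compat.
   + apply Rmult_le_pos; [apply Rmult_le_pos; lra|apply pow2_ge_0].
   + apply Rmult_le_pos; [apply Rmult_le_pos; lra|apply pow2_ge_0].
 - apply Rplus_le_le_0_compat.
   + apply Rmult_le_pos; [apply Rmult_le_pos; lra|apply pow2_ge_0].
   + apply Rmult_le_pos; [apply Rmult_le_pos; lra|apply pow2_ge_0].
 - apply Rplus_le_le_0_compat; [apply Rplus_le_le_0_compat|].
   + apply Rmult_le_pos; [apply Rmult_le_pos; lra|apply pow2_ge_0].
   + apply Rmult_le_pos; [lra|apply pow2_ge_0].
   + apply Rmult_le_pos; [apply Rmult_le_pos; lra|apply pow2_ge_0].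
 - assert (0 <= vn^2) by apply pow2_ge_0.
   assert (tau n / 50 * vn^2 <= pf x y z * tau n * vn^2).
   { assert (pf x y z * tau n * vn^2 - tau n/50*vn^2 = (pf x y z - 1/50)*(tau n*vn^2)) by field.
     assert (0 <= (pf x y z - 1/50)*(tau n*vn^2)) by (apply Rmult_le_pos; nra). lra. }
   assert (0 <= qf x y z * ((7/10)*sqrt (tau n)*vn - sqrt (tau (n-1)%nat)*vn1)^2)
     by (apply Rmult_le_pos; [lra|apply pow2_ge_0]).
   assert (0 <= sqrt (y*z) * kd2 y z * (sqrt (tau n)*vn - (7/10)*sqrt (tau (n-1)%nat)*vn1
       + sqrt (tau (n-2)%nat)*vn2)^2)
     by (apply Rmult_le_pos; [apply Rmult_le_pos; lra|apply pow2_ge_0]).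
   lra.
Qed.
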